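(* In the unknown-network setting, both the random dictatorship mechanism $g^{R}$ and the duples mechanism $g^{D}$ are valid and DSIC.
   Context: Let $V=\{1,\dots,n\}$, $n\ge2$. A relationship network assigns to every unordered pair of distinct agents one of the symmetric relations friends, enemies, impartial. Preferences: fix $w_f,w_e>0$; an agent $i$ with friend set $F$ and enemy set $E$ ranks $p,p'\in[0,1]^V$ by $p\succ p'$ iff $p_i>p'_i$, or $p_i=p'_i$ and $w_f\sum_{j\in F}(p_j-p'_j)-w_e\sum_{j\in E}(p_j-p'_j)>0$; $p\succsim p'$ means not $p'\succ p$. Unknown-network setting: agent $i$'s type set $\Theta_i$ is the set of triples $m_i=(N_i,F_i,E_i)$ with $N_i\subseteq V$ and $F_i,E_i$ disjoint subsets of $V\setminus\{i\}$; set $I_i=V\setminus(\{i\}\cup F_i\cup E_i)$. A mechanism $g:\prod_i\Theta_i\to[0,1]^V$ is valid if $\sum_ig_i(\mathbf m)\le1$ always, and DSIC if for all $i$, $\mathbf m$, $m'_i$: $g(\mathbf m)\succsim_{m_i}g(m'_i,\mathbf m_{-i})$, where $\succsim_{m_i}$ is the preference of $i$ with the friend and enemy sets in $m_i$. Random dictatorship: for agent $j$ define the choice set $C_j(\mathbf m)$ as: if $F_j\ne\varnothing$, $C_j=F_j\cap N_j$ if this is nonempty, else $C_j=F_j$; if $F_j=\varnothing\ne I_j$, $C_j=I_j\cap N_j$ if nonempty, else $C_j=I_j$; if $F_j=I_j=\varnothing$, $C_j=E_j\cap N_j$ if nonempty, else $C_j=E_j$. Let $g^R_{i|j}(\mathbf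 m)=1/|C_j(\mathbf m)|$ if $i\in C_j(\mathbf m)$ and $0$ otherwise, and $g^R_i(\mathbf m)=\frac1n\sum_{j\in V\setminus\{i\}}g^R_{i|j}(\mathbf m)$. Duples: for an agent $l$ and $j\in V\setminus\{l\}$ let $\mathrm{lev}_l(j)=1,2,3,4,5,6$ according as $j\in F_l\cap N_l$, $F_l\setminus N_l$, $I_l\cap N_l$, $I_l\setminus N_l$, $E_l\cap N_l$, $E_l\setminus N_l$ (using $l$'s report). For distinct $j,k$, agent $l\notin\{j,k\}$ votes for $j$ against $k$ if $\mathrm{lev}_l(j)<\mathrm{lev}_l(k)$ (and abstains if equal). Let $x_{jk}(\mathbf m)$ be the number of agents voting for $j$ against $k$. Set $g^D_j(\{j,k\},\mathbf m)=1,\tfrac12,0$ according as $x_{jk}>x_{kj}$, $x_{jk}=x_{kj}$, $x_{jk}<x_{kj}$, and $g^D_k(\{j,k\},\mathbf m)=1-g^D_j(\{j,k\},\mathbf m)$. Then $g^D_i(\mathbf m)=\frac{2}{n(n-1)}\sum_{j\in V\setminus\{i\}}g^D_i(\{i,j\},\mathbf m)$. *)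

(* Defs.v *)
From mathcomp Require Import all_boot all_order all_algebra.
Set Implicit Arguments. Unset Strict Implicit. Unset Printing Implicit Defensive.
Import Order.TTheory GRing.Theory Num.Theory.
Local Open Scope ring_scope.

Section Defs.
Variable n : nat.
Notation agent := 'I_n.

Definition report := ({set agent} * {set agent} * {set agent})%type.
Definition rN (m : report) : {set agent} := m.1.1.
Definition rF (m : report) : {set agent} := m.1.2.
Definition rE (m : report) : {set agent} := m.2.
Definition rI (i : agent) (m : report) : {set agent} := ~: (i |: (rF m :|: rE m)).

Definition in_type (i : agent) (m : report) : bool :=
  [disjoint rF m & rE m] && (i \notin rF m) && (i \notin rE m).

Definition profile := agent -> report.
Definition valid_profile (m : profile) : Prop := forall i, in_type i (m i).

Definition deviate (m : profile) (i : agent) (mi' : report) : profile :=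
  fun j => if j == i then mi' else m j.

Variable R : realFieldType.
Definition outcome := agent -> R.
Definition mechanism := profile -> outcome.

Definition spref (wf we : R) (i : agent) (F E : {set agent}) (p p' : outcome) : bool :=
  (p' i < p i) ||
  ((p i == p' i) &&
   (0 < wf * (\sum_(j in F) (p j - p' j)) - we * (\sum_(j in E) (p j - p' j)))).
Definition wpref (wf we : R) i F E (p p' : outcome) : bool := ~~ spref wf we i F E p' p.

Definition valid_mech (g : mechanism) : Prop :=
  forall m : profile, valid_profile m ->
    (forall i, 0 <= g m i <= 1) /\ \sum_i g m i <= 1.

Definition DSIC (wf we : R) (g : mechanism) : Prop :=
  forall (m : profile) (i : agent) (mi' : report),
    valid_profile m -> in_type i mi' ->
    wpref wf we i (rF (m i)) (rE (m i)) (g m) (g (deviate m i mi')).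

Definition restrictN (A N : {set agent}) : {set agent} :=
  if A :&: N != set0 then A :&: N else A.

Definition choice_set (m : profile) (j : agent) : {set agent} :=
  let mj := m j in
  if rF mj != set0 then restrictN (rF mj) (rN mj)
  else if rI j mj != set0 then restrictN (rI j mj) (rN mj)
  else restrictN (rE mj) (rN mj).

Definition gR_cond (m : profile) (i j : agent) : R :=
  if i \in choice_set m j then (#|choice_set m j|%:R)^-1 else 0.

Definition gR : mechanism := fun m i =>
  (n%:R)^-1 * \sum_(j | j != i) gR_cond m i j.

Definition lev (l : agent) (ml : report) (j : agent) : nat :=
  if j \in rF ml then (if j \in rN ml then 1 else 2)%N
  else if j \in rI l ml then (if j \in rN ml then 3 else 4)%N
  else if j \in rE ml then (if j \in rN ml then 5 else 6)%N
  else 0%N. (* unreachable for j != l and a report in Theta_l *)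

Definition votes (m : profile) (j k : agent) : nat :=
  #|[set l : agent | (l != j) && (l != k) && (lev l (m l) j < lev l (m l) k)%N]|.

Definition gD_pair (m : profile) (j k : agent) : R :=
  if (votes m k j < votes m j k)%N then 1
  else if votes m j k == votes m k j then 2^-1 else 0.

Definition gD : mechanism := fun m i =>
  2 / (n%:R * (n.-1)%:R) * \sum_(j | j != i) gD_pair m i j.

End Defs.

(* Main.v *)
Require Import Defs.
From mathcomp Require Import all_boot all_order all_algebra.
From mathcomp Require Import ring lra zify.
Import Order.TTheory GRing.Theory Num.Theory.
Local Open Scope ring_scope.

Lemma sum_ite (R : realFieldType) (n : nat) (P : pred 'I_n) (C : {set 'I_n}) (x : R) :
  \sum_(j | P j) (if j \in C then x else 0) = #|[pred j | P j && (j \in C)]|%:R * x.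
Proof. by rewrite -big_mkcondr sumr_const mulr_natl. Qed.

Lemma frac_le1 (R : realFieldType) (k c : nat) : (k <= c)%N -> k%:R * (c%:R : R)^-1 <= 1.
Proof.
move=> kc; case: (posnP c) => [->|cp]; first by rewrite invr0 mulr0.
by rewrite ler_pdivrMr ?ltr0n // mul1r ler_nat.
Qed.

Lemma sum_cond_le1 (R : realFieldType) n (m : profile n) (P : pred 'I_n) l :
  \sum_(j | P j) gR_cond R m j l <= 1.
Proof.
rewrite /gR_cond sum_ite; apply: frac_le1.
by apply: subset_leq_card; apply/subsetP => j /andP[].
Qed.

Lemma sum_cond_ge0 (R : realFieldType) n (m : profile n) (P : pred 'I_n) l :
  0 <= \sum_(j | P j) gR_cond R m j l.
Proof. apply: sumr_ge0 => j _; rewrite /gR_cond; case: ifP => _ //; by rewrite invr_ge0 ler0n. Qed.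

Lemma sum_cond_eq1 (R : realFieldType) n (m : profile n) (P : pred 'I_n) l :
  choice_set m l != set0 -> {subset choice_set m l <= P} ->
  \sum_(j | P j) gR_cond R m j l = 1.
Proof.
move=> ne sub; rewrite /gR_cond sum_ite.
have -> : #|[pred j | P j && (j \in choice_set m l)]| = #|choice_set m l|.
  apply: eq_card => j /=; apply/andP/idP => [[]//|h]; split=> //; exact: sub.
apply: divff; rewrite pnatr_eq0 -lt0n card_gt0 //.
Qed.

Lemma sum_cond_eq0 (R : realFieldType) n (m : profile n) (P : pred 'I_n) l :
  (forall j, j \in choice_set m l -> ~~ P j) ->
  \sum_(j | P j) gR_cond R m j l = 0.
Proof.
move=> h; apply: big1 => j Pj; rewrite /gR_cond; case: ifP => // /h; by rewrite Pj.
Qed.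
Lemma restrictN_sub n (A N : {set 'I_n}) x : x \in restrictN A N -> x \in A.
Proof. by rewrite /restrictN; case: ifP => // _; rewrite inE => /andP[]. Qed.

Lemma restrictN_ne n (A N : {set 'I_n}) : A != set0 -> restrictN A N != set0.
Proof. by rewrite /restrictN; case: ifP. Qed.

Lemma ex_other n (l : 'I_n) : (1 < n)%N -> exists k : 'I_n, k != l.
Proof.
move=> n1; have n0 : (0 < n)%N by apply: ltn_trans n1.
case: (eqVneq (nat_of_ord l) 0%N) => h.
  by exists (Ordinal n1); apply/eqP => /(congr1 val) /=; rewrite h.
by exists (Ordinal n0); apply/eqP => /(congr1 val) /= h'; rewrite -h' in h.
Qed.

Lemma cs_notl n (m : profile n) l : in_type l (m l) -> l \notin choice_set m l.
Proof.
case/andP=> /andP[_ hF] hE; rewrite /choice_set.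
case: ifP => _; first by apply/negP => /restrictN_sub; rewrite (negbTE hF).
case: ifP => _; first by apply/negP => /restrictN_sub; rewrite /rI !inE eqxx.
by apply/negP => /restrictN_sub; rewrite (negbTE hE).
Qed.

Lemma cs_ne n (m : profile n) l : (1 < n)%N -> choice_set m l != set0.
Proof.
move=> n1; rewrite /choice_set.
case: ifP => [h|/negbFE/eqP hF]; first exact: restrictN_ne.
case: ifP => [h|/negbFE/eqP hI]; first exact: restrictN_ne.
apply: restrictN_ne; apply/set0Pn; have [k kl] := ex_other _ l n1; exists k.
have : k \notin rI l (m l) by rewrite hI inE.
by rewrite /rI !inE (negbTE kl) hF inE /= negbK.
Qed.

Lemma cs_dev n (m : profile n) i mi' j : j != i ->
  choice_set (deviate m i mi') j = choice_set m j.
Proof. by move=> h; rewrite /choice_set /deviate (negbTE h). Qed.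

Lemma dev_i n (m : profile n) i mi' : deviate m i mi' i = mi'.
Proof. by rewrite /deviate eqxx. Qed.

Lemma dev_j n (m : profile n) i mi' j : j != i -> deviate m i mi' j = m j.
Proof. by move=> h; rewrite /deviate (negbTE h). Qed.
Lemma valid_from (R : realFieldType) n (g : 'I_n -> R) :
  (forall i, 0 <= g i) -> \sum_i g i <= 1 -> (forall i, 0 <= g i <= 1) /\ \sum_i g i <= 1.
Proof.
move=> h0 h1; split=> // i; rewrite h0 /=; apply: le_trans h1.
rewrite (bigD1 i) //= lerDl; exact: sumr_ge0.
Qed.

Lemma gR_valid (R : realFieldType) n : (1 < n)%N -> valid_mech (@gR n R).
Proof.
move=> n1 m _; have n0 : (0 < n)%N by apply: ltn_trans n1.
apply: valid_from => [i|].
  rewrite /gR mulr_ge0 ?invr_ge0 ?ler0n //; apply: sumr_ge0 => j _.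
  by rewrite /gR_cond; case: ifP => _ //; rewrite invr_ge0 ler0n.
rewrite /gR -mulr_sumr.
rewrite (exchange_big_dep predT) //=.
apply: (@le_trans _ _ (n%:R^-1 * \sum_(j < n) 1)).
  rewrite ler_wpM2l ?invr_ge0 ?ler0n //; apply: ler_sum => j _.
  have := (sum_cond_le1 R _ m (fun i => i != j) j); apply: le_trans; rewrite le_eqVlt; apply/orP; left; apply/eqP; apply: eq_bigl => i /=; by rewrite eq_sym.
by rewrite sumr_const card_ord -mulr_natr mul1r mulVf // pnatr_eq0 -lt0n.
Qed.

Lemma gR_i (R : realFieldType) n (m : profile n) i mi' :
  gR R (deviate m i mi') i = gR R m i.
Proof.
rewrite /gR; congr (_ * _); apply: eq_bigr => j ji.
by rewrite /gR_cond cs_dev.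
Qed.

Lemma gR_diff (R : realFieldType) n (m : profile n) i mi' j : j != i ->
  gR R (deviate m i mi') j - gR R m j =
  n%:R^-1 * (gR_cond R (deviate m i mi') j i - gR_cond R m j i).
Proof.
move=> ji; rewrite /gR -mulrBr -sumrB (bigD1 i) 1?eq_sym //= big1 ?addr0 //.
by move=> l /andP[_ li]; rewrite /gR_cond cs_dev // subrr.
Qed.

Lemma gR_sumdiff (R : realFieldType) n (m : profile n) i mi' (A : {set 'I_n}) :
  i \notin A ->
  \sum_(j in A) (gR R (deviate m i mi') j - gR R m j) =
  n%:R^-1 * (\sum_(j in A) gR_cond R (deviate m i mi') j i - \sum_(j in A) gR_cond R m j i).
Proof.
move=> iA; rewrite -sumrB mulr_sumr; apply: eq_bigr => j jA; apply: gR_diff.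
by apply/eqP=> e; rewrite -e jA in iA.
Qed.

Lemma gR_DSIC (R : realFieldType) n (wf we : R) : (1 < n)%N -> 0 < wf -> 0 < we ->
  DSIC wf we (@gR n R).
Proof.
move=> n1 wf0 we0 m i mi' vm ti'.
have ti := vm i.
rewrite /wpref /spref gR_i ltxx eqxx /= -leNgt.
move: (ti) => /andP[/andP[dFE iF] iE].
rewrite !gR_sumdiff //.
set m' := deviate m i mi'.
set aF' := \sum_(j in _) gR_cond R m' j i.
set aE' := (X in _ - we * (_ * (X - _))).
set aF := (X in wf * (_ * (_ - X)) - _).
set aE := (X in _ - we * (_ * (_ - X))).
have aE'0 : 0 <= aE' by apply: sum_cond_ge0.
have aE1 : aE <= 1 by apply: sum_cond_le1.
have aF'1 : aF' <= 1 by apply: sum_cond_le1.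
have ni : 0 <= (n%:R : R)^-1 by rewrite invr_ge0 ler0n.
suff : wf * (aF' - aF) - we * (aE' - aE) <= 0.
  move=> h; have := mulr_ge0_le0 ni h; rewrite mulrBr !mulrA ![_ * wf]mulrC ![_ * we]mulrC -!mulrA //.
have csE : {subset choice_set m i <= [pred j | j \notin rE (m i)]} ->  aE = 0.
  move=> h; apply: sum_cond_eq0 => j /h /=; by rewrite /in_mem /=.
case: (eqVneq (rF (m i)) set0) => hF.
  have aF0 : aF = 0 by rewrite /aF hF big_set0.
  have aF'0 : aF' = 0 by rewrite /aF' hF big_set0.
  case: (eqVneq (rI i (m i)) set0) => hI.
    have : aE' = 1.
      apply: sum_cond_eq1; first exact: cs_ne.
      move=> j jc; have ji : j != i.
        apply/eqP=> e; move: jc; rewrite e; apply/negP.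
        by have := @cs_notl _ m' i; rewrite /m' dev_i; apply.
      have : j \notin rI i (m i) by rewrite hI inE.
      by rewrite /rI !inE (negbTE ji) hF inE /= negbK.
    move=> e; rewrite aF0 aF'0 e; nra.
  have -> : aE = 0.
    apply: csE => j; rewrite /choice_set hF eqxx /= hI => /restrictN_sub.
    by rewrite /rI !inE /= negb_or => /andP[_]; rewrite negb_or => /andP[_].
  rewrite aF0 aF'0; nra.
have -> : aF = 1.
  apply: sum_cond_eq1; first exact: cs_ne.
  by move=> j; rewrite /choice_set hF => /restrictN_sub.
have -> : aE = 0.
  apply: csE => j; rewrite /choice_set hF => /restrictN_sub jF /=.
  by rewrite inE (disjointFr dFE jF).
nra.
Qed.

Definition pairv (R : realFieldType) (x y : nat) : R :=
  if (y < x)%N then 1 else if x == y then 2^-1 else 0.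

Lemma gD_pairE (R : realFieldType) n (m : profile n) j k :
  gD_pair R m j k = pairv R (votes m j k) (votes m k j).
Proof. by []. Qed.

Lemma pairv_sym (R : realFieldType) x y : pairv R x y + pairv R y x = 1.
Proof.
rewrite /pairv; case: (ltngtP x y) => h /=; rewrite ?add0r ?addr0 //.
lra.
Qed.

Lemma pairv_ge0 (R : realFieldType) x y : 0 <= pairv R x y.
Proof. rewrite /pairv; case: ifP => _ //; case: ifP => _ //; lra. Qed.

Lemma pairv_mono (R : realFieldType) x y x' y' : (x' <= x)%N -> (y <= y')%N ->
  pairv R x' y' <= pairv R x y.
Proof.
move=> hx hy; rewrite /pairv.
case: ifP => h1; first by rewrite ifT //; lia.
case: ifP => h2; last by case: ifP => _ //; case: ifP => _ //; lra.
case: ifP => h3 //; first lra.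
rewrite ifT; [lra | apply/eqP; move/eqP: h2; lia].
Qed.

Lemma pairv_diag (R : realFieldType) x : pairv R x x = 2^-1.
Proof. by rewrite /pairv ltnn eqxx. Qed.

Lemma gD_sumA (R : realFieldType) n (m m' : profile n) (A : {set 'I_n}) :
  \sum_(j in A) (gD R m' j - gD R m j) =
  2 / (n%:R * (n.-1)%:R) *
  \sum_(j in A) \sum_(k | k \notin A) (gD_pair R m' j k - gD_pair R m j k).
Proof.
set D := fun j k => gD_pair R m' j k - gD_pair R m j k.
have Dd : forall j, D j j = 0.
  by move=> j; rewrite /D !gD_pairE !pairv_diag subrr.
have Da : forall j k, D j k = - D k j.
  move=> j k; rewrite /D !gD_pairE.
  have h1 := pairv_sym R (votes m' j k) (votes m' k j).
  have h2 := pairv_sym R (votes m j k) (votes m k j).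
  lra.
have eq1 : forall j, gD R m' j - gD R m j = 2 / (n%:R * (n.-1)%:R) * \sum_k D j k.
  move=> j; rewrite /gD -mulrBr -sumrB; congr (_ * _).
  by rewrite [RHS](bigD1 j) //= Dd add0r.
rewrite (eq_bigr _ (fun j _ => eq1 j)) -mulr_sumr; congr (_ * _).
have -> : \sum_(j in A) \sum_k D j k =
   \sum_(j in A) \sum_(k in A) D j k + \sum_(j in A) \sum_(k | k \notin A) D j k.
  by rewrite -big_split /=; apply: eq_bigr => j _; rewrite (bigID (mem A)).
suff -> : \sum_(j in A) \sum_(k in A) D j k = 0 by rewrite add0r.
set S := LHS.
have : S = - S.
  rewrite {2}/S exchange_big -sumrN; apply: eq_bigr => k _; rewrite -sumrN.
  by apply: eq_bigr => j _; rewrite Da.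
lra.
Qed.

Lemma votes_mono n (m m' : profile n) i j k :
  (forall l, l != i -> m' l = m l) ->
  ((i != j) && (i != k) -> (lev i (m' i) j < lev i (m' i) k)%N -> (lev i (m i) j < lev i (m i) k)%N) ->
  (votes m' j k <= votes m j k)%N.
Proof.
move=> hm hi; apply: subset_leq_card; apply/subsetP => l; rewrite !inE.
case/andP=> /andP[lj lk] hl; rewrite lj lk /=.
case: (eqVneq l i) => [e|li]; last by rewrite -hm.
subst l; by apply: hi => //; rewrite lj lk.
Qed.

Lemma lev_F n (i : 'I_n) ml j : j \in rF ml -> (lev i ml j <= 2)%N.
Proof. move=> h; rewrite /lev h. by case: (_ \in rN ml). Qed.

Lemma lev_E n (i : 'I_n) ml j : in_type i ml -> j \in rE ml -> (5 <= lev i ml j)%N.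
Proof.
case/andP=> /andP[d _] _ jE; rewrite /lev (disjointFl d jE).
have -> : j \in rI i ml = false by rewrite /rI !inE jE !orbT.
by rewrite jE; case: (_ \in rN ml).
Qed.

Lemma lev_nF n (i : 'I_n) ml j : j \notin rF ml -> j != i -> (3 <= lev i ml j)%N.
Proof.
move=> jF ji; rewrite /lev (negbTE jF).
case: (boolP (j \in rI i ml)) => jI; first by case: (_ \in rN ml).
move: jI; rewrite /rI !inE (negbTE ji) (negbTE jF) /= negbK => ->.
by case: (_ \in rN ml).
Qed.

Lemma lev_nE n (i : 'I_n) ml j : j \notin rE ml -> j != i -> (lev i ml j <= 4)%N.
Proof.
move=> jE ji; rewrite /lev; case: (boolP (j \in rF ml)) => jF; first by case: (_ \in rN ml).
have -> : j \in rI i ml by rewrite /rI !inE (negbTE ji) (negbTE jF) (negbTE jE).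
by case: (_ \in rN ml).
Qed.

Lemma gD_valid (R : realFieldType) n : (1 < n)%N -> valid_mech (@gD n R).
Proof.
move=> n1 m _; have n0 : (0 < n)%N by apply: ltn_trans n1.
have K0 : ((n.-1)%:R : R) != 0 by rewrite pnatr_eq0 -lt0n; lia.
have hn : (n%:R : R) = (n.-1)%:R + 1 by rewrite natr1 prednK.
have c0 : 0 <= 2 / (n%:R * (n.-1)%:R) :> R.
  by rewrite divr_ge0 ?mulr_ge0 ?ler0n.
apply: valid_from => [i|].
  rewrite /gD mulr_ge0 //; apply: sumr_ge0 => j _; exact: pairv_ge0.
rewrite /gD -mulr_sumr.
set T := \sum_i \sum_j gD_pair R m i j.
have eS : \sum_i \sum_(j | j != i) gD_pair R m i j = T - n%:R / 2.
  rewrite (eq_bigr (fun i => \sum_j gD_pair R m i j - 2^-1)) => [|i _].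
    by rewrite sumrB sumr_const card_ord -(mulr_natr (2^-1 : R) n) mulrC.
  by rewrite [X in X - _](bigD1 i) //= gD_pairE pairv_diag addrC addrK.
have eT : T + T = n%:R * n%:R.
  rewrite {2}/T exchange_big /T -big_split /=.
  rewrite (eq_bigr (fun i => n%:R)) => [|i _].
    by rewrite sumr_const card_ord -(mulr_natr (n%:R : R) n).
  rewrite -big_split /= (eq_bigr (fun j => 1)) => [|j _].
    by rewrite sumr_const card_ord -(mulr_natr (1 : R) n) mul1r.
  by rewrite !gD_pairE pairv_sym.
rewrite eS.
have -> : T = n%:R * n%:R / 2 by rewrite -eT; field.
rewrite hn le_eqVlt; apply/orP; left; apply/eqP.
by field; rewrite K0 -hn pnatr_eq0 -lt0n n0.
Qed.

Lemma eq_sym_ne n (a b : 'I_n) : a != b -> b != a.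
Proof. by rewrite eq_sym. Qed.
Arguments eq_sym_ne {n a b}.
Arguments votes_mono {n m m' i j k}.
Arguments lev_F {n} i {ml j}.
Arguments lev_E {n i ml j}.
Arguments lev_nF {n i ml j}.
Arguments lev_nE {n i ml j}.
Lemma gD_DSIC (R : realFieldType) n (wf we : R) : (1 < n)%N -> 0 < wf -> 0 < we ->
  DSIC wf we (@gD n R).
Proof.
move=> n1 wf0 we0 m i mi' vm ti'.
have ti := vm i.
set m' := deviate m i mi'.
have hm : forall l, l != i -> m' l = m l by move=> l; apply: dev_j.
have hm' : forall l, l != i -> m l = m' l by move=> l li; rewrite hm.
have c0 : 0 <= 2 / (n%:R * (n.-1)%:R) :> R.
  by rewrite divr_ge0 ?mulr_ge0 ?ler0n.
have gi : gD R m' i = gD R m i.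
  rewrite /gD; congr (_ * _); apply: eq_bigr => k _; rewrite !gD_pairE.
  have e1 : votes m' i k = votes m i k.
    apply/eqP; rewrite eqn_leq; apply/andP; split;
      [apply: (votes_mono hm)|apply: (votes_mono hm')] => /andP[]; by rewrite eqxx.
  have e2 : votes m' k i = votes m k i.
    apply/eqP; rewrite eqn_leq; apply/andP; split;
      [apply: (votes_mono hm)|apply: (votes_mono hm')] => /andP[_]; by rewrite eqxx.
  by rewrite e1 e2.
rewrite /wpref /spref gi ltxx eqxx /= -leNgt.
have hF : \sum_(j in rF (m i)) (gD R m' j - gD R m j) <= 0.
  rewrite gD_sumA; apply: (mulr_ge0_le0 c0); apply: sumr_le0 => j jF.
  apply: sumr_le0 => k kF; rewrite subr_le0 !gD_pairE; apply: pairv_mono.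
    apply: votes_mono hm _ => /andP[_ ik] _.
    have := lev_F i jF; have := lev_nF kF (eq_sym_ne ik); lia.
  apply: votes_mono hm' _ => /andP[ik _] h.
  have := lev_F i jF; have := lev_nF kF (eq_sym_ne ik); lia.
have hE : 0 <= \sum_(j in rE (m i)) (gD R m' j - gD R m j).
  rewrite gD_sumA; apply: mulr_ge0; first exact c0; apply: sumr_ge0 => j jE.
  apply: sumr_ge0 => k kE; rewrite subr_ge0 !gD_pairE; apply: pairv_mono.
    apply: votes_mono hm' _ => /andP[_ ik] h.
    have := lev_E ti jE; have := lev_nE kE (eq_sym_ne ik); lia.
  apply: votes_mono hm _ => /andP[ik _] _.
  have := lev_E ti jE; have := lev_nE kE (eq_sym_ne ik); lia.
nra.
Qed.

Theorem proposition1 (R : realFieldType) (n : nat) (wf we : R) :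
  (1 < n)%N -> 0 < wf -> 0 < we ->
  [/\ valid_mech (@gR n R), DSIC wf we (@gR n R),
      valid_mech (@gD n R) & DSIC wf we (@gD n R)].
Proof.
move=> n1 wf0 we0; split.
- exact: gR_valid.
- exact: gR_DSIC.
- exact: gD_valid.
- exact: gD_DSIC.
Qed.
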